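(* Let $G$ be a non-amenable group and let $H$ be an amenable normal subgroup of $G$. Then $\mathcal{T}(G/H)=\mathcal{T}(G)$.
   Context: A group $G$ admits a paradoxical decomposition if there exist positive integers $m,n$, pairwise disjoint subsets $P_1,\ldots,P_m,Q_1,\ldots,Q_n$ of $G$ and elements $g_1,\ldots,g_m,h_1,\ldots,h_n\in G$ such that $G=\bigcup_{i=1}^m P_ig_i=\bigcup_{j=1}^n Q_jh_j$; this happens if and only if $G$ is non-amenable. For a non-amenable group $G$, the Tarski number $\mathcal{T}(G)$ is the minimal value of $m+n$ over all paradoxical decompositions of $G$. *)

(* Defs.v *)
From Stdlib Require Import Reals.
Open Scope R_scope.

Record Group := {
  carrier :> Type;
  gmul : carrier -> carrier -> carrier;
  ginv : carrier -> carrier;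
  gone : carrier;
  gmulA : forall x y z, gmul x (gmul y z) = gmul (gmul x y) z;
  gmul1l : forall x, gmul gone x = x;
  gmulVl : forall x, gmul (ginv x) x = gone
}.

Arguments gmul {g}.
Arguments ginv {g}.
Arguments gone {g}.

Definition is_subgroup (G : Group) (H : G -> Prop) : Prop :=
  H gone /\ (forall x y, H x -> H y -> H (gmul x y)) /\ (forall x, H x -> H (ginv x)).

Definition is_normal_subgroup (G : Group) (H : G -> Prop) : Prop :=
  is_subgroup G H /\ forall g h, H h -> H (gmul (gmul g h) (ginv g)).

Definition is_hom (G Q : Group) (f : G -> Q) : Prop :=
  forall x y, f (gmul x y) = gmul (f x) (f y).

Definition ltrans {G : Group} (g : G) (A : G -> Prop) : G -> Prop :=
  fun y => exists a, A a /\ y = gmul g a.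

Definition rtrans {G : Group} (A : G -> Prop) (g : G) : G -> Prop :=
  fun y => exists a, A a /\ y = gmul a g.

Definition subset {G : Group} (A B : G -> Prop) : Prop := forall x, A x -> B x.
Definition disjoint {G : Group} (A B : G -> Prop) : Prop := forall x, A x -> B x -> False.
Definition union2 {G : Group} (A B : G -> Prop) : G -> Prop := fun x => A x \/ B x.

Definition amenable_on (G : Group) (S : G -> Prop) : Prop :=
  exists mu : (G -> Prop) -> R,
    mu S = 1 /\
    (forall A, subset A S -> 0 <= mu A) /\
    (forall A B, subset A S -> subset B S -> disjoint A B ->
        mu (union2 A B) = mu A + mu B) /\
    (forall g A, S g -> subset A S -> mu (ltrans g A) = mu A).

Definition amenable (G : Group) : Prop := amenable_on G (fun _ => True).

Definition paradoxical (G : Group) (m n : nat) : Prop :=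
  (0 < m)%nat /\ (0 < n)%nat /\
  exists (P Q : nat -> G -> Prop) (g h : nat -> G),
    (forall i j, (i < m)%nat -> (j < m)%nat -> i <> j -> disjoint (P i) (P j)) /\
    (forall i j, (i < n)%nat -> (j < n)%nat -> i <> j -> disjoint (Q i) (Q j)) /\
    (forall i j, (i < m)%nat -> (j < n)%nat -> disjoint (P i) (Q j)) /\
    (forall x : G, exists i, (i < m)%nat /\ rtrans (P i) (g i) x) /\
    (forall x : G, exists j, (j < n)%nat /\ rtrans (Q j) (h j) x).

Definition is_tarski_number (G : Group) (k : nat) : Prop :=
  (exists m n, paradoxical G m n /\ k = (m + n)%nat) /\
  (forall m n, paradoxical G m n -> (k <= m + n)%nat).

(* Main.v *)
Require Import Defs.
From Stdlib Require Import Reals Lra List Arith Lia Classical ClassicalEpsilon FinFun FunctionalExtensionality PropExtensionality.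
Import ListNotations.
Local Open Scope nat_scope.


Definition enum {A : Type} (P : A -> Prop) (l : list A) :=
  NoDup l /\ forall x, In x l <-> P x.

Lemma enum_exists {A : Type} (l : list A) : forall (P : A -> Prop),
  (forall x, P x -> In x l) -> exists L, enum P L.
Proof.
  induction l as [|a l IH]; intros P HP.
  - exists []. split; [constructor|]. intros x; split; [intros []|intros Px; exact (HP x Px)].
  - destruct (IH (fun x => P x /\ x <> a)) as [L [ND HL]].
    { intros x [Px Hx]. destruct (HP x Px) as [->|H]; [congruence|exact H]. }
    destruct (classic (P a)) as [Pa|nPa].
    + exists (a :: L). split.
      * constructor; [|exact ND]. intros Hin. apply HL in Hin. tauto.
      * intros x; split.
        -- intros [<-|Hx]; [exact Pa|apply HL in Hx; tauto].
        -- intros Px. destruct (classic (x = a)) as [->|ne]; [left; reflexivity|].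
           right; apply HL; tauto.
    + exists L. split; [exact ND|]. intros x; split.
      * intros Hx; apply HL in Hx; tauto.
      * intros Px; apply HL; split; [exact Px|]. intros ->; tauto.
Qed.

Lemma enum_le {A : Type} (P1 P2 : A -> Prop) L1 L2 :
  enum P1 L1 -> enum P2 L2 -> (forall x, P1 x -> P2 x) -> length L1 <= length L2.
Proof.
  intros [N1 H1] [N2 H2] Hs. apply NoDup_incl_length; [exact N1|].
  intros x Hx. apply H2, Hs, H1, Hx.
Qed.

Lemma enum_eq {A : Type} (P1 P2 : A -> Prop) L1 L2 :
  enum P1 L1 -> enum P2 L2 -> (forall x, P1 x <-> P2 x) -> length L1 = length L2.
Proof.
  intros E1 E2 H. apply Nat.le_antisymm.
  - apply (enum_le P1 P2); auto; intros; apply H; auto.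
  - apply (enum_le P2 P1); auto; intros; apply H; auto.
Qed.

Definition decb (P : Prop) : bool := if excluded_middle_informative P then true else false.
Lemma decb_true P : decb P = true <-> P.
Proof. unfold decb; destruct (excluded_middle_informative P); split; intros; congruence || tauto. Qed.

Lemma length_filter_split {A : Type} (f : A -> bool) (l : list A) :
  length l = length (filter f l) + length (filter (fun x => negb (f x)) l).
Proof.
  induction l as [|a l IH]; simpl; [reflexivity|].
  destruct (f a); simpl; lia.
Qed.

Lemma enum_union_inter {A : Type} (P1 P2 : A -> Prop) L1 L2 Lu Li :
  enum P1 L1 -> enum P2 L2 -> enum (fun x => P1 x \/ P2 x) Lu ->
  enum (fun x => P1 x /\ P2 x) Li -> length Lu + length Li = length L1 + length L2.
Proof.
  intros [N1 H1] [N2 H2] Eu Ei.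
  set (d := fun x => decb (P2 x)).
  assert (Ein : enum (fun x => P1 x /\ P2 x) (filter d L1)).
  { split; [apply NoDup_filter; exact N1|]. intros x. rewrite filter_In.
    unfold d; rewrite decb_true, H1. tauto. }
  assert (Eout : enum (fun x => P1 x \/ P2 x) (L2 ++ filter (fun x => negb (d x)) L1)).
  { split.
    - apply NoDup_app; [exact N2|apply NoDup_filter; exact N1|].
      intros a Ha Hb. apply filter_In in Hb. destruct Hb as [_ Hb].
      unfold d in Hb. destruct (decb (P2 a)) eqn:E; [discriminate|].
      apply H2 in Ha. apply (proj2 (decb_true _)) in Ha. congruence.
    - intros x. rewrite in_app_iff, filter_In, H1, H2. unfold d.
      destruct (classic (P2 x)) as [p|p].
      + split; [intros [h|[h _]]; [right|left]; exact h|intros _; left; exact p].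
      + assert (E : decb (P2 x) = false)
          by (destruct (decb (P2 x)) eqn:E; [apply (proj1 (decb_true _)) in E; tauto|reflexivity]).
        rewrite E; simpl; tauto. }
  rewrite (enum_eq _ _ _ _ Eu Eout (fun x => iff_refl _)).
  rewrite (enum_eq _ _ _ _ Ei Ein (fun x => iff_refl _)).
  rewrite length_app, (length_filter_split d L1). lia.
Qed.

Lemma enum_nil {A : Type} (P : A -> Prop) : (forall x, ~ P x) -> enum P [].
Proof. intros H; split; [constructor|]; intros x; split; [intros []|intros p; exact (H x p)]. Qed.

Lemma enum_single {A : Type} (P : A -> Prop) a : (forall x, P x <-> x = a) -> enum P [a].
Proof. intros H; split; [constructor; [intros []|constructor]|]. intros x; rewrite H; simpl; split; [intros [->|[]]; reflexivity|intros ->; left; reflexivity]. Qed.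

Lemma enum_iff {A : Type} (P P' : A -> Prop) L :
  enum P L -> (forall x, P x <-> P' x) -> enum P' L.
Proof. intros [N H] H'; split; [exact N|]; intros x; rewrite H; apply H'. Qed.

Lemma enum_remove {A : Type} (P : A -> Prop) v L L' :
  enum P L -> P v -> enum (fun x => P x /\ x <> v) L' -> length L = S (length L').
Proof.
  intros E Pv E'.
  assert (Hs : enum (fun x => x = v) [v]) by (apply enum_single; tauto).
  assert (He : enum (fun x => (P x /\ x <> v) /\ x = v) []) by (apply enum_nil; tauto).
  assert (E2 : enum (fun x => (P x /\ x <> v) \/ x = v) L).
  { apply (enum_iff _ _ _ E). intros x. split.
    - intros Px. destruct (classic (x = v)); tauto.
    - intros [[? ?]| ->]; assumption. }
  pose proof (enum_union_inter _ _ _ _ _ _ E' Hs E2 He) as Hu.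
  simpl in Hu. lia.
Qed.

From mathcomp Require classical_sets.

Section Hall.
Context {V X : Type} (bd : V -> nat) (nb : V -> nat -> X).

Definition Sof (T : V -> nat -> Prop) (PF : V -> Prop) : X -> Prop :=
  fun x => exists v i, PF v /\ i < bd v /\ T v i /\ nb v i = x.

Definition Hall (T : V -> nat -> Prop) :=
  forall PF LF LS, enum PF LF -> enum (Sof T PF) LS -> length LF <= length LS.

Lemma Sof_fin T PF LF : enum PF LF -> exists LS, enum (Sof T PF) LS.
Proof.
  intros E. apply enum_exists with (l := flat_map (fun v => map (nb v) (seq 0 (bd v))) LF).
  intros x [v [i [Pv [Hi [_ <-]]]]]. apply in_flat_map. exists v; split; [apply E; auto|].
  apply in_map, in_seq; lia.
Qed.

Lemma Hall_ext T T' : (forall v i, i < bd v -> (T v i <-> T' v i)) -> Hall T -> Hall T'.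
Proof.
  intros HT H PF LF LS EF ES. apply (H PF LF LS EF).
  apply (enum_iff _ _ _ ES). intros x; split; intros [v [i [p [q [r s]]]]];
    exists v, i; repeat split; auto; apply HT; auto.
Qed.

Lemma not_Hall T : ~ Hall T ->
  exists PF LF LS, enum PF LF /\ enum (Sof T PF) LS /\ length LS < length LF.
Proof.
  intros nH. apply NNPP; intros C. apply nH. intros PF LF LS EF ES.
  destruct (Nat.le_gt_cases (length LF) (length LS)) as [h|h]; [exact h|].
  exfalso; apply C; exists PF, LF, LS; auto.
Qed.

Lemma core (T : V -> nat -> Prop) v a b : a <> b -> Hall T ->
  forall PF1 LF1 LS1, enum PF1 LF1 ->
    enum (Sof (fun w i => T w i /\ (w,i) <> (v,a)) PF1) LS1 -> length LS1 < length LF1 ->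
  forall PF2 LF2 LS2, enum PF2 LF2 ->
    enum (Sof (fun w i => T w i /\ (w,i) <> (v,b)) PF2) LS2 -> length LS2 < length LF2 ->
  False.
Proof.
  intros ab HT PF1 LF1 LS1 E1 S1 l1 PF2 LF2 LS2 E2 S2 l2.
  assert (v1 : PF1 v).
  { apply NNPP; intros nv. pose proof (HT PF1 LF1 LS1 E1) as h.
    assert (enum (Sof T PF1) LS1) as h2.
    { apply (enum_iff _ _ _ S1). intros x; split; intros [w [i [p [q [r s]]]]];
        exists w, i; repeat split; auto.
      - tauto.
      - intros e; inversion e; subst; tauto. }
    specialize (h h2); lia. }
  assert (v2 : PF2 v).
  { apply NNPP; intros nv. pose proof (HT PF2 LF2 LS2 E2) as h.
    assert (enum (Sof T PF2) LS2) as h2.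
    { apply (enum_iff _ _ _ S2). intros x; split; intros [w [i [p [q [r s]]]]];
        exists w, i; repeat split; auto.
      - tauto.
      - intros e; inversion e; subst; tauto. }
    specialize (h h2); lia. }
  set (PU := fun w => PF1 w \/ PF2 w).
  set (PI := fun w => PF1 w /\ PF2 w).
  set (PIv := fun w => PI w /\ w <> v).
  destruct (enum_exists (LF1 ++ LF2) PU) as [LU EU].
  { intros w [h|h]; apply in_app_iff; [left; apply E1|right; apply E2]; auto. }
  destruct (enum_exists LF1 PI) as [LI EI].
  { intros w [h _]; apply E1; auto. }
  destruct (enum_exists LF1 PIv) as [LIv EIv].
  { intros w [[h _] _]; apply E1; auto. }
  set (X1 := Sof (fun w i => T w i /\ (w,i) <> (v,a)) PF1).
  set (X2 := Sof (fun w i => T w i /\ (w,i) <> (v,b)) PF2).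
  destruct (enum_exists (LS1 ++ LS2) (fun x => X1 x \/ X2 x)) as [LXU EXU].
  { intros x [h|h]; apply in_app_iff; [left; apply S1|right; apply S2]; auto. }
  destruct (enum_exists LS1 (fun x => X1 x /\ X2 x)) as [LXI EXI].
  { intros x [h _]; apply S1; auto. }
  destruct (Sof_fin T PU LU EU) as [LSU ESU].
  destruct (Sof_fin T PIv LIv EIv) as [LSI ESI].
  pose proof (enum_union_inter _ _ _ _ _ _ S1 S2 EXU EXI) as hX.
  pose proof (enum_union_inter _ _ _ _ _ _ E1 E2 EU EI) as hF.
  pose proof (enum_remove PI v LI LIv EI (conj v1 v2) EIv) as hR.
  pose proof (HT _ _ _ EU ESU) as hU.
  pose proof (HT _ _ _ EIv ESI) as hI.
  assert (iU : length LSU <= length LXU).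
  { apply (enum_le _ _ _ _ ESU EXU).
    intros x [w [i [[p|p] [q [r <-]]]]].
    - destruct (classic ((w,i) = (v,a))) as [e|e].
      + inversion e; subst. right. exists v, a; repeat split; auto.
        intros e'; inversion e'; congruence.
      + left. exists w, i; repeat split; auto.
    - destruct (classic ((w,i) = (v,b))) as [e|e].
      + inversion e; subst. left. exists v, b; repeat split; auto.
        intros e'; inversion e'; congruence.
      + right. exists w, i; repeat split; auto. }
  assert (iI : length LSI <= length LXI).
  { apply (enum_le _ _ _ _ ESI EXI).
    intros x [w [i [[[p1 p2] nv] [q [r <-]]]]].
    split; exists w, i; repeat split; auto; intros e; inversion e; congruence. }
  lia.
Qed.

Theorem hall_inf : Hall (fun _ _ => True) ->
  exists f : V -> nat, (forall v, f v < bd v) /\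
    forall u v, nb u (f u) = nb v (f v) -> u = v.
Proof.
  intros H0.
  pose (Pz := fun D : classical_sets.set (V*nat) => Hall (fun v i => ~ D (v,i))).
  destruct (@classical_sets.Zorn_bigcup _ Pz) as [D [PD Dmax]].
  - intros F FP Ftot.
    set (U := classical_sets.bigcup F (fun Y => Y)).
    assert (HU : forall p, U p <-> exists D, F D /\ D p).
    { intros p; unfold U, classical_sets.bigcup, classical_sets.mkset; simpl.
      split; [intros [D h1 h2]; eauto|intros [D [h1 h2]]; exists D; auto]. }
    assert (Key : forall l : list (V*nat), (forall p, In p l -> U p) ->
      exists D0, Pz D0 /\ (forall p, D0 p -> U p) /\ (forall p, In p l -> D0 p) /\
        (forall D, F D -> (forall p, D p -> D0 p) \/ (forall p, D0 p -> D p))).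
    { induction l as [|p l IH]; intros Hl.
      - exists (fun _ => False). split; [|split; [|split]].
        + apply (Hall_ext (fun _ _ => True)); [tauto|exact H0].
        + intros _ [].
        + intros _ [].
        + intros D _; right; intros _ [].
      - destruct IH as [D0 [P0 [S0 [I0 C0]]]].
        { intros q hq; apply Hl; right; exact hq. }
        destruct (proj1 (HU p) (Hl p (or_introl eq_refl))) as [Dp [FDp Dpp]].
        destruct (C0 Dp FDp) as [h|h].
        + exists D0; split; [|split; [|split]]; auto.
          intros q [<-|hq]; auto.
        + exists Dp; split; [|split; [|split]].
          * apply FP; exact FDp.
          * intros q hq; apply HU; eauto.
          * intros q [<-|hq]; auto.
          * intros D FD. destruct (Ftot D Dp FD FDp) as [h'|h']; [left|right]; exact h'. }
    intros PF LF LS EF ES.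
    destruct (enum_exists (flat_map (fun v => map (pair v) (seq 0 (bd v))) LF)
       (fun p => PF (fst p) /\ snd p < bd (fst p) /\ U p)) as [Lp Ep].
    { intros [v i] [h1 [h2 h3]]. apply in_flat_map. exists v; split; [apply EF; auto|].
      apply in_map, in_seq; simpl in *; lia. }
    destruct (Key Lp) as [D0 [P0 [S0 [I0 C0]]]].
    { intros p hp; apply Ep in hp; tauto. }
    apply (P0 PF LF LS EF). apply (enum_iff _ _ _ ES).
    intros x; split; intros [v [i [p [q [r s]]]]]; exists v, i; repeat split; auto.
  -
    intros h; apply r, I0, Ep; simpl; auto.
    assert (Hex : forall v, exists i, i < bd v /\ ~ D (v,i)).
    { intros v. apply NNPP; intros C.
      assert (E1 : enum (fun w => w = v) [v]) by (apply enum_single; tauto).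
      assert (E2 : enum (Sof (fun v i => ~ D (v,i)) (fun w => w = v)) []).
      { apply enum_nil. intros x [w [i [-> [q [r _]]]]]. apply C; eauto. }
      pose proof (PD _ _ _ E1 E2); simpl in *; lia. }
    assert (Huniq : forall v a b, a < bd v -> ~ D (v,a) -> b < bd v -> ~ D (v,b) -> a = b).
    { intros v a b ha Da hb Db. apply NNPP; intros ab.
      assert (NH : forall c, c < bd v -> ~ D (v,c) ->
        exists PF LF LS, enum PF LF /\
          enum (Sof (fun w i => ~ D (w,i) /\ (w,i) <> (v,c)) PF) LS /\ length LS < length LF).
      { intros c hc Dc.
        assert (nP : ~ Pz (fun p => D p \/ p = (v,c))).
        { apply (Dmax (fun p => D p \/ p = (v,c))). split.
          - intros p hp; left; exact hp.
          - intros hs. exact (Dc (hs _ (or_intror eq_refl))). }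
        destruct (not_Hall _ nP) as [PF [LF [LS [h1 [h2 h3]]]]].
        exists PF, LF, LS; split; [exact h1|split; [|exact h3]].
        apply (enum_iff _ _ _ h2). intros x; split; intros [w [i [p [q [r s]]]]];
          exists w, i; repeat split; auto; tauto. }
      destruct (NH a ha Da) as [PF1 [LF1 [LS1 [e1 [s1 l1]]]]].
      destruct (NH b hb Db) as [PF2 [LF2 [LS2 [e2 [s2 l2]]]]].
      exact (core (fun w i => ~ D (w,i)) v a b ab PD PF1 LF1 LS1 e1 s1 l1 PF2 LF2 LS2 e2 s2 l2). }
    pose (f := fun v => proj1_sig (constructive_indefinite_description _ (Hex v))).
    assert (hf : forall v, f v < bd v /\ ~ D (v, f v)).
    { intros v; exact (proj2_sig (constructive_indefinite_description _ (Hex v))). }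
    exists f. split.
    + intros v; apply hf.
    + intros u v.
      set (iu := f u). set (iv := f v).
      destruct (hf u) as [hu Du]. destruct (hf v) as [hv Dv].
      intros Heq. apply NNPP; intros uv.
      assert (E1 : enum (fun w => w = u \/ w = v) [u; v]).
      { split.
        - constructor; [simpl; intros [h|[]]; congruence|constructor; [intros []|constructor]].
        - intros x; simpl; split; [intros [h|[h|[]]]; auto|intros [h|h]; auto]. }
      assert (E2 : enum (Sof (fun v i => ~ D (v,i)) (fun w => w = u \/ w = v)) [nb u iu]).
      { apply enum_single. intros x; split.
        - intros [w [i [[->| ->] [q [r <-]]]]].
          + f_equal; apply (Huniq u); auto.
          + rewrite Heq. f_equal; apply (Huniq v); auto.
        - intros ->. exists u, iu; repeat split; auto. }
      pose proof (PD _ _ _ E1 E2); simpl in *; lia.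
Qed.

End Hall.



Section Grp.
Context {G : Group}.
Lemma g_mulA (x y z : G) : gmul x (gmul y z) = gmul (gmul x y) z.
Proof. apply gmulA. Qed.
Lemma g_mul1l (x : G) : gmul gone x = x. Proof. apply gmul1l. Qed.
Lemma g_mulVl (x : G) : gmul (ginv x) x = gone. Proof. apply gmulVl. Qed.
Lemma g_mulKl (x y : G) : gmul (ginv x) (gmul x y) = y.
Proof. rewrite g_mulA, g_mulVl, g_mul1l; reflexivity. Qed.
Lemma g_mulVr (x : G) : gmul x (ginv x) = gone.
Proof.
  rewrite <- (g_mul1l (gmul x (ginv x))).
  rewrite <- (g_mulVl (ginv x)) at 1.
  rewrite <- g_mulA, (g_mulA (ginv x)), g_mulVl, g_mul1l, g_mulVl. reflexivity.
Qed.
Lemma g_mul1r (x : G) : gmul x gone = x.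
Proof. rewrite <- (g_mulVl x), g_mulA, g_mulVr, g_mul1l; reflexivity. Qed.
Lemma g_mulKr (x y : G) : gmul x (gmul (ginv x) y) = y.
Proof. rewrite g_mulA, g_mulVr, g_mul1l; reflexivity. Qed.
Lemma g_mulVKr (a b : G) : gmul (gmul a (ginv b)) b = a.
Proof. rewrite <- g_mulA, g_mulVl, g_mul1r; reflexivity. Qed.
Lemma g_mulKVr (a b : G) : gmul (gmul a b) (ginv b) = a.
Proof. rewrite <- g_mulA, g_mulVr, g_mul1r; reflexivity. Qed.
Lemma g_inv_uniq (x y : G) : gmul x y = gone -> y = ginv x.
Proof. intros h. rewrite <- (g_mulKl x y), h, g_mul1r; reflexivity. Qed.
Lemma g_invK (x : G) : ginv (ginv x) = x.
Proof. symmetry; apply g_inv_uniq, g_mulVl. Qed.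
Lemma g_invM (x y : G) : ginv (gmul x y) = gmul (ginv y) (ginv x).
Proof.
  symmetry; apply g_inv_uniq.
  rewrite g_mulA, <- (g_mulA x y), g_mulVr, g_mul1r, g_mulVr; reflexivity.
Qed.
Lemma g_inv1 : ginv (@gone G) = gone.
Proof. symmetry; apply g_inv_uniq, g_mul1l. Qed.
Lemma g_canr (a b c : G) : gmul a c = gmul b c -> a = b.
Proof. intros h. rewrite <- (g_mulKVr a c), h, g_mulKVr; reflexivity. Qed.
End Grp.

Section Hom.
Context {G Q : Group} (pi : G -> Q) (hpi : is_hom G Q pi).
Lemma hom1 : pi gone = gone.
Proof.
  apply (g_canr _ _ (pi gone)). rewrite <- hpi, !g_mul1l; reflexivity.
Qed.
Lemma homV (x : G) : pi (ginv x) = ginv (pi x).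
Proof. apply g_inv_uniq. rewrite <- hpi, g_mulVr, hom1; reflexivity. Qed.
End Hom.

Definition rsum {A : Type} (l : list A) (f : A -> R) : R :=
  fold_right (fun a r => (f a + r)%R) 0%R l.

Lemma rsum_ext {A} (l : list A) f f' : (forall x, In x l -> f x = f' x) -> rsum l f = rsum l f'.
Proof. induction l; simpl; intros h; [reflexivity|]. rewrite h, IHl; auto. Qed.

Lemma rsum_le {A} (l : list A) f f' : (forall x, In x l -> (f x <= f' x)%R) -> (rsum l f <= rsum l f')%R.
Proof. induction l; simpl; intros h; [lra|]. pose proof (h a (or_introl eq_refl)).
  pose proof (IHl (fun x hx => h x (or_intror hx))). lra. Qed.

Lemma rsum_one {A} (l : list A) : rsum l (fun _ => 1%R) = INR (length l).
Proof. induction l; simpl; [reflexivity|]. rewrite IHl. destruct (length l); simpl; lra. Qed.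

Lemma rsum_plus {A} (l : list A) f f' : rsum l (fun x => f x + f' x)%R = (rsum l f + rsum l f')%R.
Proof. induction l; simpl; [lra|]. rewrite IHl; lra. Qed.

Lemma rsum_zero {A} (l : list A) : rsum l (fun _ => 0%R) = 0%R.
Proof. induction l; simpl; [reflexivity|]. rewrite IHl; lra. Qed.

Lemma rsum_swap {A B} (la : list A) (lb : list B) f :
  rsum la (fun a => rsum lb (fun b => f a b)) = rsum lb (fun b => rsum la (fun a => f a b)).
Proof.
  induction la; simpl.
  - rewrite rsum_zero; reflexivity.
  - rewrite IHla, <- rsum_plus; reflexivity.
Qed.

Lemma rsum_app {A} (l1 l2 : list A) f : rsum (l1 ++ l2) f = (rsum l1 f + rsum l2 f)%R.
Proof. induction l1; simpl; [lra|]. rewrite IHl1; lra. Qed.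

Lemma rsum_map {A B} (h : A -> B) l f : rsum (map h l) f = rsum l (fun x => f (h x)).
Proof. induction l; simpl; [reflexivity|]. rewrite IHl; reflexivity. Qed.

Lemma rsum_flat_map {A B} (h : A -> list B) l f :
  rsum (flat_map h l) f = rsum l (fun x => rsum (h x) f).
Proof. induction l; simpl; [reflexivity|]. rewrite rsum_app, IHl; reflexivity. Qed.

Lemma rsum_single {A} (l : list A) (f : A -> R) z0 :
  NoDup l -> In z0 l -> (forall z, In z l -> z <> z0 -> f z = 0%R) -> rsum l f = f z0.
Proof.
  induction l as [|a l IH]; intros nd hin h; [destruct hin|].
  inversion nd; subst. simpl. destruct hin as [<-|hin].
  - rewrite (rsum_ext l f (fun _ => 0%R)), rsum_zero; [lra|].
    intros x hx; apply h; [right; exact hx|]. intros ->; contradiction.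
  - rewrite IH; auto. rewrite (h a); [lra|left; reflexivity|]. intros ->; contradiction.
    intros z hz; apply h; right; exact hz.
Qed.

Lemma pred_ext {A : Type} (P P' : A -> Prop) : (forall x, P x <-> P' x) -> P = P'.
Proof. intros h; apply functional_extensionality; intros x; apply propositional_extensionality, h. Qed.

Section Mean.
Context {G Q : Group} (pi : G -> Q) (hpi : is_hom G Q pi) (H : G -> Prop)
  (hker : forall g, pi g = gone <-> H g) (s : Q -> G) (hs : forall q, pi (s q) = q)
  (mu : (G -> Prop) -> R) (mu1 : mu H = 1%R)
  (mu0 : forall A, subset A H -> (0 <= mu A)%R)
  (muadd : forall A B, subset A H -> subset B H -> disjoint A B -> mu (union2 A B) = (mu A + mu B)%R)
  (muinv : forall g A, H g -> subset A H -> mu (ltrans g A) = mu A).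

Definition fib (y : Q) : G -> Prop := fun x => pi x = y.
Definition nu (y : Q) (A : G -> Prop) : R := mu (fun k => A (gmul (ginv k) (s y))).

Lemma lift_H y A : subset A (fib y) -> subset (fun k => A (gmul (ginv k) (s y))) H.
Proof.
  intros hA k hk. apply hA in hk. unfold fib in hk.
  rewrite hpi, (homV pi hpi), hs in hk. apply hker.
  assert (e : ginv (pi k) = gone).
  { apply (g_canr _ _ y). rewrite hk, g_mul1l; reflexivity. }
  rewrite <- (g_invK (pi k)), e, g_inv1; reflexivity.
Qed.

Lemma nu_ext y A B : (forall x, A x <-> B x) -> nu y A = nu y B.
Proof. intros h; unfold nu. f_equal. apply pred_ext; intros; apply h. Qed.

Lemma nu_add y A B : subset A (fib y) -> subset B (fib y) -> disjoint A B ->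
  nu y (union2 A B) = (nu y A + nu y B)%R.
Proof.
  intros hA hB hAB. unfold nu. apply muadd; try apply lift_H; auto.
  intros k; apply hAB.
Qed.

Lemma nu_ge0 y A : subset A (fib y) -> (0 <= nu y A)%R.
Proof. intros hA; apply mu0, lift_H, hA. Qed.

Lemma nu_fib y : nu y (fib y) = 1%R.
Proof.
  unfold nu. rewrite <- mu1. f_equal. apply pred_ext. intros k. unfold fib.
  rewrite hpi, (homV pi hpi), hs, <- hker. split.
  - intros h. assert (e : ginv (pi k) = gone).
    { apply (g_canr _ _ y). rewrite h, g_mul1l; reflexivity. }
    rewrite <- (g_invK (pi k)), e, g_inv1; reflexivity.
  - intros ->. rewrite g_inv1, g_mul1l; reflexivity.
Qed.

Lemma nu_le1 y A : subset A (fib y) -> (nu y A <= 1)%R.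
Proof.
  intros hA. rewrite <- (nu_fib y).
  rewrite (nu_ext y (fib y) (union2 A (fun x => fib y x /\ ~ A x))).
  - rewrite nu_add.
    + pose proof (nu_ge0 y (fun x => fib y x /\ ~ A x)) as h.
      assert (subset (fun x => fib y x /\ ~ A x) (fib y)) as h2 by (intros x [p _]; exact p).
      specialize (h h2); lra.
    + exact hA.
    + intros x [p _]; exact p.
    + intros x p [_ q]; contradiction.
  - intros x; unfold union2; split.
    + intros p; destruct (classic (A x)); auto.
    + intros [p|[p _]]; auto.
Qed.

Lemma nu_empty y A : (forall x, ~ A x) -> nu y A = 0%R.
Proof.
  intros hA.
  assert (e : nu y A = nu y (union2 A A)) by (apply nu_ext; unfold union2; tauto).
  rewrite nu_add in e; try (intros x p; destruct (hA x p)).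
  lra.
Qed.

Lemma nu_trans y A (c : G) : subset A (fib y) ->
  nu (gmul y (ginv (pi c))) (fun u => A (gmul u c)) = nu y A.
Proof.
  intros hA. unfold nu.
  set (z := gmul y (ginv (pi c))).
  set (t := gmul (gmul (s z) c) (ginv (s y))).
  assert (Ht : H t).
  { apply hker. unfold t. rewrite !hpi, (homV pi hpi), !hs. unfold z.
    rewrite g_mulVKr, g_mulVr; reflexivity. }
  rewrite <- (muinv t _ Ht (lift_H y A hA)). f_equal. apply pred_ext. intros w.
  unfold ltrans. split.
  - intros hw. exists (gmul (ginv t) w). split.
    + rewrite g_invM, g_invK. unfold t.
      rewrite <- g_mulA, g_mulVKr. rewrite g_mulA; exact hw.
    + rewrite g_mulKr; reflexivity.
  - intros [a [ha ->]].
    match goal with |- A ?e => replace e with (gmul (ginv a) (s y)); [exact ha|] end.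
    unfold t. rewrite !g_invM, !g_invK, !g_mulA, !g_mulVKr; reflexivity.
Qed.

Lemma nu_list {K : Type} y (Ks : list K) (A : K -> G -> Prop) :
  NoDup Ks -> (forall k, In k Ks -> subset (A k) (fib y)) ->
  (forall k k', In k Ks -> In k' Ks -> k <> k' -> disjoint (A k) (A k')) ->
  nu y (fun x => exists k, In k Ks /\ A k x) = rsum Ks (fun k => nu y (A k)).
Proof.
  induction Ks as [|k Ks IH]; intros nd hs1 hd; simpl.
  - apply nu_empty. intros x [k [[] _]].
  - inversion nd; subst.
    rewrite <- IH; auto.
    + rewrite <- nu_add.
      * apply nu_ext. intros x; unfold union2; split.
        -- intros [k' [[<-|h1] h2]]; [left; exact h2|right; exists k'; auto].
        -- intros [h|[k' [h1 h2]]]; [exists k; auto|exists k'; auto].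
      * apply hs1; left; reflexivity.
      * intros x0 [k' [h1 h2]]. apply (hs1 k'); [right; exact h1|exact h2].
      * intros x0 h1 [k' [h2 h3]]. refine (hd k k' (or_introl eq_refl) (or_intror h2) _ x0 h1 h3).
        intros ->; contradiction.
    + intros k' h; apply hs1; right; exact h.
    + intros k1 k2 h1 h2; apply hd; right; auto.
Qed.

End Mean.



Lemma least_ex (Pr : nat -> Prop) : (exists i, Pr i) -> exists i, Pr i /\ forall k, k < i -> ~ Pr k.
Proof.
  intros [i0 hi0]. apply NNPP; intros C.
  assert (forall i, forall k, k <= i -> ~ Pr k).
  { induction i as [|i IH]; intros k hk hP.
    - assert (k = 0) by lia; subst. apply C. exists 0; split; auto. intros; lia.
    - destruct (Nat.eq_dec k (S i)) as [->|ne].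
      + apply C. exists (S i); split; auto. intros k' hk'. apply IH; lia.
      + apply (IH k); auto; lia. }
  apply (H i0 i0); auto.
Qed.

Lemma NoDup_pairs {A : Type} (f : A -> nat) (l : list A) :
  NoDup l -> NoDup (flat_map (fun w => map (pair w) (seq 0 (f w))) l).
Proof.
  induction l as [|a l IH]; intros nd; simpl; [constructor|].
  inversion nd; subst. apply NoDup_app.
  - apply Injective_map_NoDup; [intros x y e; inversion e; auto|apply seq_NoDup].
  - apply IH; auto.
  - intros [w i] h1 h2. apply in_map_iff in h1. destruct h1 as [j [e _]]. inversion e; subst.
    apply in_flat_map in h2. destruct h2 as [w' [h3 h4]]. apply in_map_iff in h4.
    destruct h4 as [j' [e' _]]. inversion e'; subst. contradiction.
Qed.

Lemma In_pairs {A : Type} (f : A -> nat) (l : list A) k :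
  In k (flat_map (fun w => map (pair w) (seq 0 (f w))) l) <-> In (fst k) l /\ snd k < f (fst k).
Proof.
  destruct k as [w i]; simpl. rewrite in_flat_map. split.
  - intros [w' [h1 h2]]. apply in_map_iff in h2. destruct h2 as [j [e h]]. inversion e; subst.
    apply in_seq in h. split; auto; lia.
  - intros [h1 h2]. exists w; split; auto. apply in_map, in_seq; lia.
Qed.

Section Transfer.
Context {G Q : Group} (pi : G -> Q) (hpi : is_hom G Q pi) (H : G -> Prop)
  (hker : forall g, pi g = gone <-> H g) (s : Q -> G) (hs : forall q, pi (s q) = q)
  (mu : (G -> Prop) -> R) (mu1 : mu H = 1%R)
  (mu0 : forall A, subset A H -> (0 <= mu A)%R)
  (muadd : forall A B, subset A H -> subset B H -> disjoint A B -> mu (union2 A B) = (mu A + mu B)%R)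
  (muinv : forall g A, H g -> subset A H -> mu (ltrans g A) = mu A)
  (m n : nat) (P Rr : nat -> G -> Prop) (g h : nat -> G)
  (dP : forall i j, i < m -> j < m -> i <> j -> disjoint (P i) (P j))
  (dR : forall i j, i < n -> j < n -> i <> j -> disjoint (Rr i) (Rr j))
  (dPR : forall i j, i < m -> j < n -> disjoint (P i) (Rr j))
  (cP : forall x : G, exists i, i < m /\ rtrans (P i) (g i) x)
  (cR : forall x : G, exists j, j < n /\ rtrans (Rr j) (h j) x).

Definition bdb (b : bool) : nat := if b then n else m.
Definition bdv (v : Q * bool) : nat := bdb (snd v).
Definition cel (b : bool) (i : nat) : G := if b then h i else g i.
Definition pc (b : bool) (i : nat) : G -> Prop := if b then Rr i else P i.
Definition nbv (v : Q * bool) (i : nat) : Q := gmul (fst v) (ginv (pi (cel (snd v) i))).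

Lemma pc_disj b i b' i' : i < bdb b -> i' < bdb b' -> (b,i) <> (b',i') ->
  disjoint (pc b i) (pc b' i').
Proof.
  destruct b, b'; unfold bdb, pc; simpl; intros h1 h2 ne.
  - apply dR; auto; intros e; subst; apply ne; reflexivity.
  - intros x p q. exact (dPR i' i h2 h1 x q p).
  - apply dPR; auto.
  - apply dP; auto; intros e; subst; apply ne; reflexivity.
Qed.

Lemma pc_cover b x : exists i, i < bdb b /\ pc b i (gmul x (ginv (cel b i))).
Proof.
  destruct b; unfold bdb, cel, pc; simpl.
  - destruct (cR x) as [j [hj [a [ha ->]]]]. exists j; split; auto. rewrite g_mulKVr; exact ha.
  - destruct (cP x) as [j [hj [a [ha ->]]]]. exists j; split; auto. rewrite g_mulKVr; exact ha.
Qed.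

Definition Xs (v : Q * bool) (i : nat) : G -> Prop := fun x =>
  pi x = fst v /\ pc (snd v) i (gmul x (ginv (cel (snd v) i))) /\
  forall k, k < i -> ~ pc (snd v) k (gmul x (ginv (cel (snd v) k))).

Lemma Xs_sum v : rsum (seq 0 (bdv v)) (fun i => nu s mu (fst v) (Xs v i)) = 1%R.
Proof.
  rewrite <- (nu_list pi hpi H hker s hs mu muadd).
  - rewrite <- (nu_fib pi hpi H hker s hs mu mu1 (fst v)). apply (nu_ext s mu).
    intros x; split.
    + intros [i [_ [p _]]]; exact p.
    + intros hx. destruct (least_ex (fun i => pc (snd v) i (gmul x (ginv (cel (snd v) i)))))
        as [i [hi hl]].
      { destruct (pc_cover (snd v) x) as [i [_ p]]; eauto. }
      exists i. split; [|split; [exact hx|split; auto]].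
      apply in_seq. split; [lia|]. unfold bdv. simpl.
      destruct (pc_cover (snd v) x) as [j [hj pj]].
      destruct (Nat.lt_ge_cases i (bdb (snd v))) as [l|l]; [lia|].
      exfalso. apply (hl j); auto. lia.
  - apply seq_NoDup.
  - intros i _ x [p _]; exact p.
  - intros i i' h1 h2 ne x [_ [p1 q1]] [_ [p2 q2]].
    apply in_seq in h1; apply in_seq in h2.
    destruct (Nat.lt_ge_cases i i') as [l|l].
    + exact (q2 i l p1).
    + assert (i' < i) by lia. exact (q1 i' H0 p2).
Qed.

Lemma hall_full : Hall bdv nbv (fun _ _ => True).
Proof.
  intros PF LF LS EF ES.
  apply INR_le.
  set (K := flat_map (fun w => map (pair w) (seq 0 (bdv w))) LF).
  set (key := fun k : (Q * bool) * nat => nbv (fst k) (snd k)).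
  set (Y := fun (k : (Q * bool) * nat) (u : G) => Xs (fst k) (snd k) (gmul u (cel (snd (fst k)) (snd k)))).
  set (Y' := fun z k u => key k = z /\ Y k u).
  assert (HK : forall k, In k K <-> In (fst k) LF /\ snd k < bdv (fst k)) by (intros; apply In_pairs).
  assert (NK : NoDup K) by (apply NoDup_pairs, EF).
  assert (Hkey : forall k, In k K -> In (key k) LS).
  { intros [w i] hk. apply HK in hk. simpl in hk. apply ES. exists w, i.
    repeat split; try tauto. apply EF; tauto. }
  assert (Yf : forall z k, subset (Y' z k) (fib pi z)).
  { intros z [[y b] i] u [e hu]. unfold fib. rewrite <- e. unfold key, nbv; simpl.
    destruct hu as [hu _]. simpl in hu. rewrite hpi in hu. rewrite <- hu.
    rewrite g_mulKVr. reflexivity. }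
  assert (Yd : forall z k k', In k K -> In k' K -> k <> k' -> disjoint (Y' z k) (Y' z k')).
  { intros z [[y b] i] [[y' b'] i'] h1 h2 ne u [_ [e1 [p1 _]]] [_ [e2 [p2 _]]].
    apply HK in h1; apply HK in h2; simpl in *.
    rewrite g_mulKVr in p1, p2.
    destruct (classic ((b,i) = (b',i'))) as [e|e].
    - inversion e; subst; apply ne; congruence.
    - exact (pc_disj b i b' i' (proj2 h1) (proj2 h2) e u p1 p2). }
  rewrite <- !rsum_one.
  transitivity (rsum LF (fun w => rsum (seq 0 (bdv w)) (fun i => nu s mu (fst w) (Xs w i)))).
  { right. apply rsum_ext. intros w _. symmetry; apply Xs_sum. }
  rewrite <- (rsum_ext _ (fun w => rsum (map (pair w) (seq 0 (bdv w)))
               (fun k => nu s mu (fst (fst k)) (Xs (fst k) (snd k))))).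
  2: { intros w _. rewrite rsum_map. reflexivity. }
  rewrite <- rsum_flat_map. fold K.
  rewrite (rsum_ext K _ (fun k => nu s mu (key k) (Y k))).
  2: { intros [[y b] i] hk. unfold key, nbv, Y; simpl.
       symmetry. apply (nu_trans pi hpi H hker s hs mu muinv y).
       intros x [p _]; exact p. }
  rewrite (rsum_ext K _ (fun k => rsum LS (fun z => nu s mu z (Y' z k)))).
  2: { intros k hk. symmetry.
       rewrite (rsum_single LS _ (key k)); [| apply ES | apply Hkey; auto |].
       - apply (nu_ext s mu). intros u; unfold Y'; tauto.
       - intros z _ ne. apply (nu_empty pi hpi H hker s hs mu muadd).
         intros u [e _]; auto. }
  rewrite rsum_swap.
  apply rsum_le. intros z hz.
  rewrite <- (nu_list pi hpi H hker s hs mu muadd); auto.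
  - apply (nu_le1 pi hpi H hker s hs mu mu1 mu0 muadd).
    intros u [k [_ hu]]. exact (Yf z k u hu).
Qed.

Lemma quot_paradox : exists (P' R' : nat -> Q -> Prop) (g' h' : nat -> Q),
    (forall i j, (i < m)%nat -> (j < m)%nat -> i <> j -> disjoint (P' i) (P' j)) /\
    (forall i j, (i < n)%nat -> (j < n)%nat -> i <> j -> disjoint (R' i) (R' j)) /\
    (forall i j, (i < m)%nat -> (j < n)%nat -> disjoint (P' i) (R' j)) /\
    (forall x : Q, exists i, (i < m)%nat /\ rtrans (P' i) (g' i) x) /\
    (forall x : Q, exists j, (j < n)%nat /\ rtrans (R' j) (h' j) x).
Proof.
  destruct (hall_inf bdv nbv hall_full) as [f [hf finj]].
  exists (fun i z => exists y, f (y,false) = i /\ z = nbv (y,false) i),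
         (fun i z => exists y, f (y,true) = i /\ z = nbv (y,true) i),
         (fun i => pi (g i)), (fun i => pi (h i)).
  split; [|split; [|split; [|split]]].
  - intros i j hi hj ne z [y [e1 ->]] [y' [e2 e3]].
    subst. assert (e : (y,false) = (y',false)) by (apply finj; exact e3).
    inversion e; subst; auto.
  - intros i j hi hj ne z [y [e1 ->]] [y' [e2 e3]].
    subst. assert (e : (y,true) = (y',true)) by (apply finj; exact e3).
    inversion e; subst; auto.
  - intros i j hi hj z [y [e1 ->]] [y' [e2 e3]].
    subst. assert (e : (y,false) = (y',true)) by (apply finj; exact e3).
    discriminate.
  - intros x. exists (f (x,false)). split; [exact (hf (x,false))|].
    exists (nbv (x,false) (f (x,false))). split; [exists x; auto|].
    unfold nbv, cel; simpl. rewrite g_mulVKr; reflexivity.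
  - intros x. exists (f (x,true)). split; [exact (hf (x,true))|].
    exists (nbv (x,true) (f (x,true))). split; [exists x; auto|].
    unfold nbv, cel; simpl. rewrite g_mulVKr; reflexivity.
Qed.

End Transfer.



Theorem theorem1 (G Q : Group) (H : G -> Prop) (pi : G -> Q)
  (hHn : is_normal_subgroup G H)
  (hHam : amenable_on G H)
  (hGna : ~ amenable G)
  (hpi : is_hom G Q pi)
  (hsurj : forall q : Q, exists g : G, pi g = q)
  (hker : forall g : G, pi g = gone <-> H g) :
  forall k : nat, is_tarski_number Q k <-> is_tarski_number G k.
Proof.
  destruct hHam as [mu [m1 [m0 [madd minv]]]].
  pose (s := fun q => proj1_sig (constructive_indefinite_description _ (hsurj q))).
  assert (hs : forall q, pi (s q) = q).
  { intros q; exact (proj2_sig (constructive_indefinite_description _ (hsurj q))). }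
  assert (EQ : forall m n, paradoxical Q m n <-> paradoxical G m n).
  { intros m n; split.
    - intros [hm [hn [P [Rr [g [h [dP [dR [dPR [cP cR]]]]]]]]]].
      split; [exact hm|split; [exact hn|]].
      exists (fun i x => P i (pi x)), (fun i x => Rr i (pi x)),
             (fun i => s (g i)), (fun i => s (h i)).
      split; [|split; [|split; [|split]]].
      + intros i j hi hj ne x p q; exact (dP i j hi hj ne _ p q).
      + intros i j hi hj ne x p q; exact (dR i j hi hj ne _ p q).
      + intros i j hi hj x p q; exact (dPR i j hi hj _ p q).
      + intros x. destruct (cP (pi x)) as [i [hi [a [ha e]]]].
        exists i; split; [exact hi|]. exists (gmul x (ginv (s (g i)))). split.
        * rewrite hpi, (homV pi hpi), hs, e, g_mulKVr. exact ha.
        * rewrite g_mulVKr; reflexivity.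
      + intros x. destruct (cR (pi x)) as [i [hi [a [ha e]]]].
        exists i; split; [exact hi|]. exists (gmul x (ginv (s (h i)))). split.
        * rewrite hpi, (homV pi hpi), hs, e, g_mulKVr. exact ha.
        * rewrite g_mulVKr; reflexivity.
    - intros [hm [hn [P [Rr [g [h [dP [dR [dPR [cP cR]]]]]]]]]].
      split; [exact hm|split; [exact hn|]].
      exact (quot_paradox pi hpi H hker s hs mu m1 m0 madd minv m n P Rr g h dP dR dPR cP cR). }
  intros k; unfold is_tarski_number; split.
  - intros [[m [n [p e]]] hmin]. split.
    + exists m, n; split; [apply EQ; exact p|exact e].
    + intros m' n' p'. apply hmin, EQ, p'.
  - intros [[m [n [p e]]] hmin]. split.
    + exists m, n; split; [apply EQ; exact p|exact e].
    + intros m' n' p'. apply hmin, EQ, p'.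
Qed.
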